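(* Let $n\ge 2$, $d_1,\dots,d_n\ge 1$, $L_i\in\mathbb{C}^{d_i\times d_i}$ ($i=1,\dots,n$) and $C_{i,i-1}\in\mathbb{C}^{d_i\times d_{i-1}}$ ($i=2,\dots,n$). Assume: (i) each $L_i$ is invertible and diagonalizable, $L_iV_i=V_i\Lambda_i$ with $V_i$ invertible and $\Lambda_i=\mathrm{diag}(\lambda_{i,1},\dots,\lambda_{i,d_i})$; (ii) $\sigma(L_i)\cap\sigma(L_j)=\emptyset$ for all $i\neq j$; (iii) $\|L_1\|<\|L_2\|<\cdots<\|L_n\|\le 1$. Then for every $i\in\{2,\dots,n\}$, every $x=(x_1,\dots,x_n)$ and every $t\ge 0$, $$\Pi_i\circ\mathsf{Lin}^{\circ t}(x)=\sum_{j=1}^{i}(-1)^{i-j}D_{i,j}L_j^t\,\mathsf{pert}_j(x_1,\dots,x_j).$$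
   Context: Each $\mathbb{C}^{d_i}$ carries a fixed norm and matrices the induced operator norm. $\Pi_i(x_1,\dots,x_n)=x_i$; $\mathsf{Lin}(x_1,\dots,x_n)=(L_1x_1,\;L_2x_2+C_{2,1}x_1,\;\dots,\;L_nx_n+C_{n,n-1}x_{n-1})$ and $\mathsf{Lin}^{\circ t}$ is its $t$-fold iterate. Matrices $D_{i,j}\in\mathbb{C}^{d_i\times d_j}$ ($1\le j\le i\le n$) are defined recursively in $i$: $D_{i,i}=I_{d_i}$; for $i\ge 2$ and $1\le j\le i-1$, $\tilde C_{i,j}\in\mathbb{C}^{d_i\times d_j}$ has entries $[\tilde C_{i,j}]_{\ell,m}=[V_i^{-1}C_{i,i-1}D_{i-1,j}V_j]_{\ell,m}(1-\lambda_{j,m}/\lambda_{i,\ell})^{-1}$ and $D_{i,j}=L_i^{-1}V_i\tilde C_{i,j}V_j^{-1}$. The maps $\mathsf{pert}_i:\mathbb{C}^{d_1}\times\cdots\times\mathbb{C}^{d_i}\to\mathbb{C}^{d_i}$ are $\mathsf{pert}_1(x_1)=x_1$ and $\mathsf{pert}_i(x_1,\dots,x_i)=x_i+\sum_{j=1}^{i-1}(-1)^{i-1-j}D_{i,j}\mathsf{pert}_j(x_1,\dots,x_j)$ for $i\ge 2$. *)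

(* Defs.v *)
From HB Require Import structures.
From mathcomp Require Import all_boot all_order all_algebra.
From mathcomp Require Import complex.
From mathcomp Require Import boolp classical_sets reals.
Set Implicit Arguments. Unset Strict Implicit. Unset Printing Implicit Defensive.
Import Order.TTheory GRing.Theory Num.Theory.
Local Open Scope ring_scope.

Section Defs.
Variable R : realType.
Local Notation C := (R[i]).

Definition cmod (a : C) : R := ComplexField.Normc.normc a.

Definition is_vnorm (m : nat) (N : 'cV[C]_m -> R) : Prop :=
  [/\ forall v, 0 <= N v,
      forall v, N v = 0 -> v = 0,
      forall (a : C) v, N (a *: v) = cmod a * N v
    & forall v w, N (v + w) <= N v + N w].

Definition opnorm (m : nat) (N : 'cV[C]_m -> R) (A : 'M[C]_m) : R :=
  sup [set r : R | exists v : 'cV[C]_m, N v <= 1 /\ r = N (A *m v)].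

Definition spectrum (m : nat) (A : 'M[C]_m) : C -> Prop :=
  fun a => eigenvalue A a.

Variable d : nat -> nat.
Variable L : forall i : nat, 'M[C]_(d i).
Variable Cm : forall i : nat, 'M[C]_(d i, d i.-1).
Variable V : forall i : nat, 'M[C]_(d i).
Variable lam : forall i : nat, 'I_(d i) -> C.      (* lam i k = lambda_{i,k+1} *)

(* Blocks are indexed 1..n (index 0 unused). *)
Definition Lin (x : forall i : nat, 'cV[C]_(d i)) : forall i : nat, 'cV[C]_(d i) :=
  fun i => match i return 'cV[C]_(d i) with
           | 0 => 0
           | i'.+1 => L i'.+1 *m x i'.+1 + (if i' == 0%N then 0 else Cm i'.+1 *m x i')
           end.

Fixpoint Dm (i j : nat) {struct i} : 'M[C]_(d i, d j) :=
  if i == j then conform_mx 0 (1%:M : 'M[C]_(d i)) else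
  match i return 'M[C]_(d i, d j) with
  | 0 => 0
  | i'.+1 =>
      if (1 <= j <= i')%N then
        let M := invmx (V i'.+1) *m Cm i'.+1 *m Dm i' j *m V j in
        let Ct : 'M[C]_(d i'.+1, d j) :=
          \matrix_(l, k) (M l k * (1 - @lam j k / @lam i'.+1 l)^-1) in
        invmx (L i'.+1) *m V i'.+1 *m Ct *m invmx (V j)
      else 0
  end.

(* pertAll i j = pert_j(x_1,...,x_j) for 1 <= j <= i *)
Fixpoint pertAll (x : forall i : nat, 'cV[C]_(d i)) (i : nat) {struct i}
  : forall j : nat, 'cV[C]_(d j) :=
  match i with
  | 0 => fun j => 0
  | i'.+1 => fun j =>
      if j == i'.+1 then
        x j + \sum_(1 <= k < i'.+1) ((-1) ^+ (i' - k) *: (Dm j k *m pertAll x i' k))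
      else pertAll x i' j
  end.

Definition pert (j : nat) (x : forall i : nat, 'cV[C]_(d i)) : 'cV[C]_(d j) :=
  pertAll x j j.

End Defs.

(* Main.v *)
Require Import Defs.
From HB Require Import structures.
From mathcomp Require Import all_boot all_order all_algebra.
From mathcomp Require Import complex.
From mathcomp Require Import ring.
From mathcomp Require Import boolp classical_sets reals.
Import Order.TTheory GRing.Theory Num.Theory.
Local Open Scope ring_scope.

Lemma Dm_diag (R : realType) (d : nat -> nat)
  (L : forall i : nat, 'M[R[i]]_(d i))
  (Cm : forall i : nat, 'M[R[i]]_(d i, d i.-1))
  (V : forall i : nat, 'M[R[i]]_(d i))
  (lam : forall i : nat, 'I_(d i) -> R[i]) i :
  Dm L Cm V lam i i = 1%:M.
Proof. by case: i => [|i] /=; rewrite ?eqxx conform_mx_id. Qed.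

Lemma Dm_lt (R : realType) (d : nat -> nat)
  (L : forall i : nat, 'M[R[i]]_(d i))
  (Cm : forall i : nat, 'M[R[i]]_(d i, d i.-1))
  (V : forall i : nat, 'M[R[i]]_(d i))
  (lam : forall i : nat, 'I_(d i) -> R[i]) i j :
  (1 <= j <= i)%N ->
  Dm L Cm V lam i.+1 j = invmx (L i.+1) *m V i.+1 *m
     (\matrix_(l, k) ((invmx (V i.+1) *m Cm i.+1 *m Dm L Cm V lam i j *m V j) l k
          * (1 - lam j k / lam i.+1 l)^-1)) *m invmx (V j).
Proof.
move=> Hj /=. have -> : (i.+1 == j) = false.
  by apply/negbTE; move/andP: Hj => [_ Hj]; rewrite eq_sym neq_ltn ltnS Hj.
by rewrite Hj.
Qed.

Lemma pertAll_le (R : realType) (d : nat -> nat)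
  (L : forall i : nat, 'M[R[i]]_(d i))
  (Cm : forall i : nat, 'M[R[i]]_(d i, d i.-1))
  (V : forall i : nat, 'M[R[i]]_(d i))
  (lam : forall i : nat, 'I_(d i) -> R[i]) x i j :
  (j <= i)%N -> pertAll L Cm V lam x i j = pert L Cm V lam j x.
Proof.
elim: i => [|i IH] Hj.
  by move: Hj; rewrite leqn0 => /eqP ->.
rewrite /=; case: eqP => [->|/eqP Hne]; first by rewrite /pert /= eqxx.
by apply: IH; rewrite -ltnS ltn_neqAle Hne Hj.
Qed.

Lemma sylv (R : realType) (d : nat -> nat)
  (L : forall i : nat, 'M[R[i]]_(d i))
  (Cm : forall i : nat, 'M[R[i]]_(d i, d i.-1))
  (V : forall i : nat, 'M[R[i]]_(d i))
  (lam : forall i : nat, 'I_(d i) -> R[i]) i j :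
  (1 <= j <= i)%N -> L i.+1 \in unitmx -> V i.+1 \in unitmx -> V j \in unitmx ->
  L i.+1 *m V i.+1 = V i.+1 *m diag_mx (\row_k lam i.+1 k) ->
  L j *m V j = V j *m diag_mx (\row_k lam j k) ->
  (forall l, lam i.+1 l != 0) -> (forall l k, lam i.+1 l != lam j k) ->
  L i.+1 *m Dm L Cm V lam i.+1 j
  = Dm L Cm V lam i.+1 j *m L j + Cm i.+1 *m Dm L Cm V lam i j.
Proof.
move=> Hj HL HA HB eA eB nz ne.
rewrite Dm_lt //.
set A := V i.+1. set B := V j. set D' := Dm L Cm V lam i j.
set M := invmx A *m Cm i.+1 *m D' *m B.
set Ct := \matrix_(l, k) _.
set Li := diag_mx _ in eA. set Lj := diag_mx _ in eB.
have e1 : @mulmx _ (d i.+1) (d i.+1.-1) (d j) (Cm i.+1) D' = A *m M *m invmx B.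
  by rewrite /M !mulmxA mulmxV // mul1mx mulmxK.
have e2 : L j = B *m Lj *m invmx B by rewrite -eB mulmxK.
have key : Li *m Ct = Ct *m Lj + Li *m M.
  apply/matrixP => l k.
  rewrite /Li /Lj !mul_diag_mx mul_mx_diag !mxE /Ct ?mxE.
  have nzl := nz l. have nel := ne l k.
  field; by rewrite nzl subr_eq0 nel.
rewrite e1 e2 !mulmxA mulmxV // mul1mx mulmxKV //.
apply: (can_inj (mulKmx HL)) => /=.
rewrite mulmxDr !mulmxA mulmxV // mul1mx.
rewrite -/A eA.
rewrite -!(mulmxA A) key.
by rewrite /M mulmxDl mulmxDr !mulmxA.
Qed.
Lemma lam_facts (F : fieldType) m (L V : 'M[F]_m) (r : 'rV_m) :
  L \in unitmx -> V \in unitmx -> L *m V = V *m diag_mx r ->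
  forall l, eigenvalue L (r 0 l) /\ r 0 l != 0.
Proof.
move=> HL HV HLV l.
have e : invmx V *m L = diag_mx r *m invmx V.
  apply: (can_inj (mulmxK HV)) => /=.
  by rewrite -mulmxA HLV mulmxA mulVmx // mul1mx mulmxKV.
set w := row l (invmx V).
have ew : w *m L = r 0 l *: w.
  by rewrite /w -row_mul e row_mul row_diag_mx -scalemxAl -rowE.
have wn : w != 0.
  apply/eqP => w0.
  have : w *m V = delta_mx 0 l by rewrite /w -row_mul mulVmx // row1.
  rewrite w0 mul0mx => /matrixP /(_ 0 l); rewrite !mxE !eqxx /=.
  by move/eqP; rewrite eq_sym oner_eq0.
split; first by apply/eigenvalueP; exists w.
apply/eqP => r0; move: ew; rewrite r0 scale0r => ew.
by move/eqP: wn; apply; rewrite -(mulmxK HL w) ew mul0mx.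
Qed.

Lemma sum_recr (V : zmodType) m k (F : nat -> V) : (m <= k)%N ->
  \sum_(m <= j < k.+1) F j = \sum_(m <= j < k) F j + F k.
Proof. exact: big_nat_recr. Qed.

Lemma oppDK (W : zmodType) (u v : W) : -(u + v) + v = - u.
Proof. by rewrite opprD addrNK. Qed.

Theorem lemma3 (R : realType) (n : nat) (d : nat -> nat)
  (N : forall i : nat, 'cV[R[i]]_(d i) -> R)
  (L : forall i : nat, 'M[R[i]]_(d i))
  (Cm : forall i : nat, 'M[R[i]]_(d i, d i.-1))
  (V : forall i : nat, 'M[R[i]]_(d i))
  (lam : forall i : nat, 'I_(d i) -> R[i]) :
  (2 <= n)%N ->
  (forall i, (1 <= i <= n)%N -> (1 <= d i)%N) ->
  (forall i, (1 <= i <= n)%N -> is_vnorm (N i)) ->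
  (* (i) *)
  (forall i, (1 <= i <= n)%N ->
     [/\ L i \in unitmx, V i \in unitmx
       & L i *m V i = V i *m diag_mx (\row_k lam i k)]) ->
  (* (ii) *)
  (forall i j, (1 <= i <= n)%N -> (1 <= j <= n)%N -> i <> j ->
     forall a, ~ (spectrum (L i) a /\ spectrum (L j) a)) ->
  (* (iii) *)
  (forall i, (1 <= i < n)%N -> opnorm (N i) (L i) < opnorm (N i.+1) (L i.+1)) ->
  opnorm (N n) (L n) <= 1 ->
  forall i, (2 <= i <= n)%N ->
  forall (x : forall j : nat, 'cV[R[i]]_(d j)) (t : nat),
    iter t (Lin L Cm) x i =
    \sum_(1 <= j < i.+1)
       ((-1) ^+ (i - j) *: (Dm L Cm V lam i j *m (L j ^+ t *m pert L Cm V lam j x))).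
Proof.
move=> n2 _ _ Hi Hsp _ _ i Hi2 x t.
have Hlam : forall a, (1 <= a <= n)%N -> forall l,
    eigenvalue (L a) (lam a l) /\ lam a l != 0.
  move=> a Ha l; case: (Hi a Ha) => HL HV HLV.
  by have := @lam_facts _ _ _ _ _ HL HV HLV l; rewrite mxE.
have Hne : forall a b, (1 <= a <= n)%N -> (1 <= b <= n)%N -> a <> b ->
    forall l k, lam a l != lam b k.
  move=> a b Ha Hb Hab l k; apply/eqP => e.
  apply: (Hsp a b Ha Hb Hab (lam a l)); split; first exact: (Hlam a Ha l).1.
  by rewrite e; exact: (Hlam b Hb k).1.
have Syl : forall a j, (1 <= j)%N -> (j < a)%N -> (a <= n)%N ->
    L a *m Dm L Cm V lam a j
    = Dm L Cm V lam a j *m L j + Cm a *m Dm L Cm V lam a.-1 j.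
  move=> [|a] j j1 ja an //.
  have Ha : (1 <= a.+1 <= n)%N by rewrite an.
  have Hj : (1 <= j <= n)%N by rewrite j1 /= (leq_trans (ltnW ja)).
  case: (Hi _ Ha) => HL HA eA; case: (Hi _ Hj) => _ HB eB.
  apply: sylv => //; first by rewrite j1 -ltnS.
    by move=> l; exact: (Hlam _ Ha l).2.
  move=> l k; apply: Hne => // e; by move: ja; rewrite e ltnn.
suff H : forall a, (1 <= a <= n)%N -> iter t (Lin L Cm) x a =
    \sum_(1 <= j < a.+1)
       ((-1) ^+ (a - j) *: (Dm L Cm V lam a j *m (L j ^+ t *m pert L Cm V lam j x))).
  by apply: H; case/andP: Hi2 => h1 h2; rewrite h2 andbT ltnW.
elim: t => [|t IH] [|a] // Ha.
- rewrite [iter _ _ _]/= big_nat_recr // subnn expr0 scale1r Dm_diag mul1mx.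
  rewrite expr0 mul1mx.
  have -> : pert L Cm V lam a.+1 x = x a.+1 + \sum_(1 <= k < a.+1)
      ((-1)^+(a-k) *: (Dm L Cm V lam a.+1 k *m pertAll L Cm V lam x a k)).
    by rewrite /pert /= eqxx.
  have -> : \sum_(1 <= k < a.+1)
      ((-1)^+(a-k) *: (Dm L Cm V lam a.+1 k *m pertAll L Cm V lam x a k)) =
      - \sum_(1 <= j < a.+1) ((-1) ^+ (a.+1 - j) *:
         (Dm L Cm V lam a.+1 j *m (L j ^+ 0 *m pert L Cm V lam j x))).
    rewrite -sumrN; apply: eq_big_nat => k /andP[k1 k2].
    have ka : (k <= a)%N by rewrite -ltnS.
    rewrite expr0 mul1mx pertAll_le // subSn // exprS mulN1r.
    by rewrite scaleNr opprK.
  by apply/esym; apply: (etrans (addrC _ _)); exact: subrK.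
rewrite iterS.
have -> : forall z, Lin L Cm z a.+1 = L a.+1 *m z a.+1 + (if a == 0%N then 0 else Cm a.+1 *m z a) by [].
rewrite (IH a.+1 Ha); case: a Ha => [|a] Ha.
  rewrite addr0 !big_nat1 subnn expr0 !scale1r Dm_diag !mul1mx exprS.
  by rewrite mulmxA.
have Ha' : (1 <= a.+1 <= n)%N by case/andP: Ha => _ h; apply: ltnW.
rewrite (_ : (a.+1 == 0%N) = false) // (IH a.+1 Ha') (@sum_recr _ 1 a.+2) // (@sum_recr _ 1 a.+2) //.
rewrite subnn expr0 !scale1r Dm_diag !mul1mx exprS mulmxDr -addrAC -mulmxA; congr (_ + _).
rewrite !mulmx_sumr -big_split; apply: eq_big_nat => j /andP[j1 j2].
have ja : (j <= a.+1)%N by rewrite -ltnS.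
have an : (a.+2 <= n)%N by case/andP: Ha.
have hS : L a.+2 *m Dm L Cm V lam a.+2 j
    = Dm L Cm V lam a.+2 j *m L j + Cm a.+2 *m Dm L Cm V lam a.+1 j.
  exact: (Syl a.+2 j).
have eL : L j ^+ t.+1 = L j *m L j ^+ t by rewrite exprS.
rewrite -!scalemxAr subSn // exprS mulN1r !scaleNr eL !mulmxA hS.
rewrite mulmxDl mulmxDl scalerDr.
exact: oppDK.

Qed.
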